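(* Let $X$ be any normed space. Then $\mathcal{A}(X)=\mathcal{R}(X)\neq\emptyset$.
   Context: For a normed space $X$ let $S_X$ be its unit sphere, equipped with the norm topology and the kernel $k(x,y)=\|x-y\|$. For a positive regular Borel measure $\mu$ its potential is $U^\mu(x)=\int k(x,y)\,d\mu(y)$. Let $\mathfrak{M}_1(S_X)$ denote the regular Borel probability measures on $X$ concentrated on $S_X$, and $\mathfrak{M}_1^{\#}(S_X)$ those with finite support in $S_X$. For $\mu$ put $A(\mu,S_X):=\overline{\mathrm{conv}}\{U^\mu(x):x\in S_X\}=[\inf_{S_X}U^\mu,\sup_{S_X}U^\mu]$. Then $\mathcal{A}(X):=\bigcap_{\mu\in\mathfrak{M}_1(S_X)}A(\mu,S_X)$ and $\mathcal{R}(X):=\bigcap_{\mu\in\mathfrak{M}_1^{\#}(S_X)}A(\mu,S_X)$ (equivalently $\mathcal{R}(X)=\bigcap_n\bigcap_{w_1,\dots,w_n\in S_X}\overline{\mathrm{conv}}\{\frac1n\sum_j\|x-w_j\|:x\in S_X\}$). *)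

(* Defs.v *)
From HB Require Import structures.
From mathcomp Require Import all_boot all_order all_algebra.
From mathcomp Require Import all_classical all_reals all_analysis.
Set Implicit Arguments. Unset Strict Implicit. Unset Printing Implicit Defensive.
Import Order.TTheory GRing.Theory Num.Theory.
Import numFieldNormedType.Exports.
Local Open Scope classical_set_scope.
Local Open Scope ring_scope.

Section Defs.
Context {R : realType} {X : normedModType R}.

Definition borelX := g_sigma_algebraType (@open X).

Definition unit_sphere : set X := [set x : X | `|x| = 1].

Definition potential (mu : {measure set borelX -> \bar R}) (x : X) : R :=
  \int[mu]_(y in [set: borelX]) `|x - (y : X)|.

Definition regular (mu : {measure set borelX -> \bar R}) : Prop :=
  forall A : set borelX, measurable A ->
    mu A = ereal_inf [set mu U | U in [set U : set X | open U /\ A `<=` U]] /\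
    mu A = ereal_sup [set mu K | K in [set K : set X | compact K /\ K `<=` A]].

Definition M1 (mu : probability borelX R) : Prop :=
  regular mu /\ mu (~` unit_sphere) = 0%E.

Definition M1fin (mu : probability borelX R) : Prop :=
  M1 mu /\ exists F : set X, [/\ finite_set F, F `<=` unit_sphere & mu F = 1%E].

Definition Aset (mu : probability borelX R) : set R :=
  [set r : R | inf (potential mu @` unit_sphere) <= r <= sup (potential mu @` unit_sphere)].

Definition calA : set R := [set r : R | forall mu, M1 mu -> Aset mu r].
Definition calR : set R := [set r : R | forall mu, M1fin mu -> Aset mu r].

End Defs.
Arguments calA : clear implicits.
Arguments calR : clear implicits.

(* Main.v *)
Require Import Defs.
From HB Require Import structures.
From mathcomp Require Import all_boot all_order all_algebra.
From mathcomp Require Import all_classical all_reals all_analysis.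
From mathcomp Require Import measurable_realfun lra.
Set Implicit Arguments. Unset Strict Implicit. Unset Printing Implicit Defensive.
Import Order.TTheory GRing.Theory Num.Theory.
Import numFieldNormedType.Exports.
Local Open Scope classical_set_scope.

Section Helpers.
Local Open Scope classical_set_scope.
Local Open Scope ring_scope.
Context {R : realType} {X : normedModType R}.
Local Notation T := (@borelX R X).

Lemma L_open (U : set X) : open U -> measurable (U : set T).
Proof. move=> oU; exact: sub_sigma_algebra. Qed.

Lemma L_closed (U : set X) : closed U -> measurable (U : set T).
Proof.
move=> cU; rewrite -(setCK U); apply: measurableC; apply: L_open.
exact: closed_openC.
Qed.

Lemma L_compact (U : set X) : compact U -> measurable (U : set T).
Proof. by move=> cU; apply: L_closed; apply: compact_closed => //; exact: norm_hausdorff. Qed.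

Lemma L_finite (U : set X) : finite_set U -> measurable (U : set T).
Proof. by move=> fU; apply: L_compact; exact: finite_compact. Qed.

Lemma L_cont (f : X -> R) : continuous f -> measurable_fun setT (f : T -> R).
Proof.
move=> cf; apply: (measurability _ (RGenOpens.measurableE R)).
move=> _ [_ [a [b ->] <-]]; rewrite setTI; apply: L_open.
move/continuousP: cf; apply; exact: interval_open.
Qed.

Lemma L_dist_cont (x : X) : continuous (fun y : X => `|x - y|).
Proof.
move=> y; apply: (@continuous_comp _ _ _ (fun y : X => x - y) (@Num.norm _ X)).
  by apply: continuousB; [exact: cst_continuous | by move=> ?; exact: cvg_id].
exact: norm_continuous.
Qed.

Lemma L_sphere : measurable (unit_sphere : set T).
Proof.
have := @L_cont (fun y : X => `|y|) (@norm_continuous _ _) measurableT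
  [set 1] (measurable_set1 _).
by rewrite setTI.
Qed.


Lemma L_seq_fin (s : seq X) : finite_set [set` s].
Proof. by apply/finite_seqP; exists s. Qed.

Lemma L_null (nu : probability T R) (F : set X) : measurable (F : set T) ->
  nu F = 1%E -> forall B : set T, measurable B -> nu B = nu (B `&` F).
Proof.
move=> mF nuF B mB.
have nuC : nu (~` F) = 0%E by rewrite probability_setC // nuF subee.
rewrite (measureDI nu mB mF) [X in (X + _)%E](_ : _ = 0%E) ?add0e //.
apply/eqP; rewrite eq_le measure_ge0 andbT -nuC.
apply: le_measure; rewrite ?inE //.
- exact: measurableD.
- exact: measurableC.
Qed.

Lemma L_reg (nu : probability T R) (F : set X) : finite_set F -> nu F = 1%E ->
  regular nu.
Proof.
move=> fF nuF A mA.
have mF : measurable (F : set T) := L_finite fF.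
have key := L_null mF nuF.
split.
- apply/eqP; rewrite eq_le; apply/andP; split.
  + apply: le_ereal_inf_tmp => _ [U [oU AU] <-]; apply: le_measure => //;
      rewrite inE //; exact: L_open.
  + apply: ereal_inf_lbound; exists (~` (F `\` A)).
      split; last by move=> y Ay [].
      apply: closed_openC; apply: compact_closed; first exact: norm_hausdorff.
      by apply: finite_compact; exact: finite_setD.
    have mU : measurable (~` (F `\` A) : set T).
      by apply: measurableC; exact: measurableD.
    have e1 := key _ mU; have e2 := key _ mA.
    apply: (etrans e1); apply: (etrans _ (esym e2)); congr (nu _).
    apply/seteqP; split => y [Hy Fy]; split => //.
      by apply: contrapT => nAy; apply: Hy.
    by move=> [].
- apply/eqP; rewrite eq_le; apply/andP; split.
  + apply: le_ereal_sup_tmp; exists (nu (A `&` F)); last by rewrite -key.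
    exists (A `&` F) => //; split; last exact: subIsetl.
    by apply: finite_compact; apply: finite_setIr.
  + apply: ge_ereal_sup => _ [K [cK KA] <-]; apply: le_measure => //;
      rewrite inE //; exact: L_compact.
Qed.

Lemma L_integral_fin (nu : probability T R) (s : seq X) (f : T -> \bar R) :
  uniq s -> nu [set` s] = 1%E -> measurable_fun setT f -> (forall y, 0 <= f y)%E ->
  (\int[nu]_y f y = \sum_(z <- s) f z * nu [set z])%E.
Proof.
move=> us nus mf f0.
have ms : measurable ([set` s] : set T) := L_finite (L_seq_fin s).
rewrite (@ge0_negligible_integral _ _ _ nu setT (~` [set` s])) //; last 2 first.
- exact: measurableC.
- by apply: (etrans (probability_setC nu ms)); rewrite nus subee.
rewrite setTD setCK.
elim: s us {nus} ms => [|z s IH] /= us ms.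
  by rewrite big_nil (_ : [set` [::]] = set0) ?integral_set0 //;
    apply/seteqP; split => y.
move/andP: us => [zs us].
have mz : measurable ([set z] : set T) by apply: L_finite; exact: finite_set1.
have ms' : measurable ([set` s] : set T) := L_finite (L_seq_fin s).
have -> : [set` (z :: s)] = [set z] `|` [set` s].
  apply/seteqP; split => y /=.
    by rewrite inE => /orP[/eqP->|ys]; [left | right].
  by move=> [->|ys]; rewrite inE ?eqxx // ys orbT.
rewrite ge0_integral_setU //; last 2 first.
- by apply: measurable_funS mf.
- by rewrite disj_set2E; apply/eqP/seteqP; split => y //= [-> ]; move/negP: zs.
rewrite big_cons IH // (eq_integral (fun _ => f z)); last first.
  by move=> y; rewrite inE => ->.
by rewrite integral_cst // muleC.
Qed.


Lemma L_fin (nu : probability T R) (A : set T) : measurable A ->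
  (nu A)%E \is a fin_num.
Proof.
move=> mA; rewrite ge0_fin_numE ?measure_ge0 //.
by apply: (le_lt_trans (probability_le1 nu mA)); rewrite ltey.
Qed.

Lemma L_mdist (x : X) : measurable_fun setT (fun y : T => (`|x - y|)%:E).
Proof.
apply/(@measurable_EFinP _ T R setT (fun y : T => `|x - y|)).
apply: L_cont; exact: L_dist_cont.
Qed.

Lemma L_potE (mu : probability T R) : mu (~` unit_sphere) = 0%E -> forall x : X,
  (potential mu x)%:E = (\int[mu]_y (`|x - y|)%:E)%E /\ 0 <= potential mu x <= `|x| + 1.
Proof.
move=> mu0 x.
have mf := L_mdist x.
have I0 : (0 <= \int[mu]_y (`|x - y|)%:E)%E.
  by apply: integral_ge0 => y _; rewrite lee_fin.
have I1 : (\int[mu]_y (`|x - y|)%:E <= (`|x| + 1)%:E)%E.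
  rewrite (@ge0_negligible_integral _ _ _ mu setT (~` unit_sphere)) //; last first.
    by apply: measurableC; exact: L_sphere.
  rewrite setTD setCK.
  apply: (@le_trans _ _ (\int[mu]_(y in unit_sphere) (`|x| + 1)%:E)%E).
    apply: ge0_le_integral => //.
    - exact: L_sphere.
    - exact: (measurable_funS measurableT (@subsetT _ _) mf).
    - move=> y Sy; rewrite lee_fin; rewrite /unit_sphere /= in Sy.
      by rewrite -Sy ler_normB.
  rewrite integral_cst; last exact: L_sphere.
  rewrite -[leRHS]mule1; apply: lee_wpmul2l; first by rewrite lee_fin addr_ge0.
  exact: probability_le1 L_sphere.
have fI : (\int[mu]_y (`|x - y|)%:E)%E \is a fin_num.
  by rewrite ge0_fin_numE // (le_lt_trans I1) // ltey.
have E : (potential mu x)%:E = (\int[mu]_y (`|x - y|)%:E)%E by rewrite /potential /Rintegral fineK.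
split => //.
by apply/andP; split; rewrite -lee_fin E.
Qed.


Lemma L_pot_fin (nu : probability T R) (s : seq X) : uniq s -> nu [set` s] = 1%E ->
  forall x : X, potential nu x = \sum_(z <- s) fine (nu [set z]) * `|x - z|.
Proof.
move=> us nus x.
rewrite /potential /Rintegral (L_integral_fin us nus (L_mdist x)); last first.
  by move=> y; rewrite lee_fin.
rewrite (eq_bigr (fun z => (fine (nu [set z]) * `|x - z|)%:E)); last first.
  move=> z _; rewrite EFinM fineK; first exact: muleC.
  by apply: L_fin; apply: L_finite; exact: finite_set1.
by rewrite sumEFin.
Qed.

Lemma L_w (nu : probability T R) (s : seq X) : uniq s -> nu [set` s] = 1%E ->
  \sum_(z <- s) fine (nu [set z]) = 1 /\ forall z, 0 <= fine (nu [set z]).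
Proof.
move=> us nus; split; last by move=> z; apply: fine_ge0; exact: measure_ge0.
have := L_integral_fin us nus (measurable_cst (1%:E)) (fun _ => lee01).
have -> : (\int[nu]_y (cst 1%:E) y = 1)%E.
  by rewrite integral_cst // mul1e; exact: probability_setT.
move=> /esym.
rewrite (eq_bigr (fun z => (fine (nu [set z]))%:E)); last first.
  move=> z _; rewrite mul1e fineK //; apply: L_fin; apply: L_finite.
  exact: finite_set1.
by rewrite sumEFin => -[].
Qed.

Lemma L_M1fin_seq (nu : probability T R) : M1fin nu ->
  exists s : seq X, [/\ uniq s, nu [set` s] = 1%E & forall z, z \in s -> unit_sphere z].
Proof.
move=> [_ [F [fF FS nuF]]].
have [s0 F0] := (finite_seqP F).1 fF.
exists (undup s0); split; first exact: undup_uniq.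
- have -> : [set` undup s0] = F.
    by rewrite F0; apply/seteqP; split => y /=; rewrite mem_undup.
  exact: nuF.
- by move=> z; rewrite mem_undup => zs; apply: FS; rewrite F0.
Qed.

Lemma L_bnd (nu : probability T R) : nu (~` unit_sphere) = 0%E ->
  has_lbound (potential nu @` unit_sphere) /\ has_ubound (potential nu @` unit_sphere)
  /\ forall x, unit_sphere x -> 0 <= potential nu x <= 2.
Proof.
move=> nu0.
have B x : unit_sphere x -> 0 <= potential nu x <= 2.
  move=> Sx; have [_ /andP[h1 h2]] := L_potE nu0 x.
  by rewrite h1 /=; move: h2; rewrite /unit_sphere /= in Sx; rewrite Sx.
split; first by exists 0 => _ [x Sx <-]; have /andP[] := B x Sx.
split; first by exists 2 => _ [x Sx <-]; have /andP[] := B x Sx.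
exact: B.
Qed.

Lemma L_cross (mu nu : probability T R) : M1fin mu -> M1fin nu ->
  inf (potential mu @` unit_sphere) <= sup (potential nu @` unit_sphere).
Proof.
move=> Mmu Mnu.
have [sm [usm musm smS]] := L_M1fin_seq Mmu.
have [sn [usn nusn snS]] := L_M1fin_seq Mnu.
have [lbm [_ _]] := L_bnd Mmu.1.2.
have [_ [ubn _]] := L_bnd Mnu.1.2.
have [wm1 wm0] := L_w usm musm.
have [wn1 wn0] := L_w usn nusn.
have e : \sum_(x <- sn) fine (nu [set x]) * potential mu x =
         \sum_(y <- sm) fine (mu [set y]) * potential nu y.
  rewrite [LHS](eq_bigr (fun x => \sum_(y <- sm)
     fine (nu [set x]) * fine (mu [set y]) * `|x - y|)); last first.
    move=> x _; rewrite (L_pot_fin usm musm) mulr_sumr.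
    by apply: eq_bigr => y _; rewrite mulrA.
  rewrite [RHS](eq_bigr (fun y => \sum_(x <- sn)
     fine (nu [set x]) * fine (mu [set y]) * `|x - y|)); last first.
    move=> y _; rewrite (L_pot_fin usn nusn) mulr_sumr.
    by apply: eq_bigr => x _; rewrite distrC mulrCA mulrA.
  exact: exchange_big.
apply: (@le_trans _ _ (\sum_(x <- sn) fine (nu [set x]) * potential mu x)).
  rewrite -[leLHS]mul1r -wn1 mulr_suml big_seq [leRHS]big_seq.
  apply: ler_sum => x xs; apply: ler_wpM2l => //.
  by apply: ge_inf => //; exists x => //; exact: snS.
rewrite e -[leRHS]mul1r -wm1 mulr_suml big_seq [leRHS]big_seq.
apply: ler_sum => y ys; apply: ler_wpM2l => //.
by apply: ub_le_sup => //; exists y => //; exact: smS.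
Qed.

End Helpers.

Section Phi.
Local Open Scope classical_set_scope.
Local Open Scope ring_scope.
Context {R : realType} {X : normedModType R}.
Local Notation T := (@borelX R X).

Fixpoint phi (e : R) (d : X) (s : seq X) (y : X) : X :=
  if s is c :: s' then (if `|c - y| < e then c else phi e d s' y) else d.

Lemma phi_S e d s y : unit_sphere d -> (forall c, c \in s -> unit_sphere c) ->
  unit_sphere (phi e d s y).
Proof.
move=> Sd; elim: s => [|c s IH] //= Hs.
case: ifP => _; first by apply: Hs; rewrite mem_head.
by apply: IH => z zs; apply: Hs; rewrite inE zs orbT.
Qed.

Lemma phi_in e d s y : phi e d s y \in d :: s.
Proof.
elim: s => [|c s IH] /=; first by rewrite mem_head.
case: ifP => _; first by rewrite !inE eqxx orbT.
by move: IH; rewrite !inE => /orP[->|->]; rewrite ?orbT.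
Qed.

Lemma phi_close e d s y : (exists2 c, c \in s & `|c - y| < e) ->
  `|phi e d s y - y| < e.
Proof.
elim: s => [[c]|c s IH [c' c's c'y]] //=.
case: ifP => // ncy; apply: IH; exists c' => //.
move: c's; rewrite inE => /orP[/eqP ce|//].
by move: ncy; rewrite -ce c'y.
Qed.

Lemma L_bool_meas e c : measurable_fun setT (fun y : T => `|c - y| < e).
Proof.
apply: measurable_fun_ltr; last exact: measurable_cst.
apply: L_cont; exact: L_dist_cont.
Qed.

Lemma phi_meas e d s : measurable_fun setT (phi e d s : T -> T).
Proof.
elim: s => [|c s IH] /=; first exact: measurable_cst.
by apply: measurable_fun_ifT => //; exact: L_bool_meas.
Qed.

Lemma phi_hmeas e d s (h : X -> X -> R) : (forall c, continuous (fun y => h y c)) ->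
  measurable_fun setT (fun y : T => h y (phi e d s y)).
Proof.
move=> hc; elim: s => [|c s IH] /=; first exact: L_cont.
have -> : (fun y : T => h y (if `|c - y| < e then c else phi e d s y)) =
  (fun y : T => if `|c - y| < e then h y c else h y (phi e d s y)).
  by apply: funext => y; case: ifP.
apply: measurable_fun_ifT => //; first exact: L_bool_meas.
exact: L_cont.
Qed.

End Phi.

Section Approx.
Local Open Scope classical_set_scope.
Local Open Scope ring_scope.
Context {R : realType} {X : normedModType R}.
Local Notation T := (@borelX R X).

Definition mkmfun (f : T -> T) (mf : measurable_fun setT f) : {mfun T >-> T} :=
  HB.pack f (isMeasurableFun.Build _ _ T T f mf).

Lemma mkmfunE f mf : (@mkmfun f mf : T -> T) = f.
Proof. by []. Qed.

Lemma L_muS (mu : probability T R) : mu (~` unit_sphere) = 0%E -> mu unit_sphere = 1%E.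
Proof.
move=> mu0.
have h : mu (~` unit_sphere) = (1 - mu unit_sphere)%E := probability_setC mu L_sphere.
move: h; rewrite mu0 -(fineK (L_fin mu L_sphere)) => -[] /eqP.
by rewrite eq_sym subr_eq0 => /eqP <-.
Qed.

Lemma L_push (mu : probability T R) (phi : {mfun T >-> T}) (A : set T) :
  distribution mu phi A = mu (phi @^-1` A).
Proof. by []. Qed.


Lemma L_approx (mu : probability T R) : M1 mu -> forall e : R, 0 < e ->
  exists nu : probability T R, M1fin nu /\ forall x : X,
    potential nu x <= potential mu x + 3 * e /\ potential mu x <= potential nu x + 3 * e.
Proof.
move=> [reg mu0] e e0.
have mS : measurable (unit_sphere : set T) := L_sphere.
have muS := L_muS mu0.
have [_ inner] := reg _ mS.
have : ((1 - e)%:E < ereal_sup [set mu K | K in [set K : set X | compact K /\ K `<=` unit_sphere]])%E.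
  rewrite -inner; apply: (@lt_le_trans _ _ 1%E); first by rewrite lte_fin; lra.
  by rewrite le_eqVlt; apply/orP; left; apply/eqP; exact: (esym muS).
move=> h; have [_ [K [cK KS] <-] muK] := ereal_sup_gt h; clear h.
have mK : measurable (K : set T) := L_compact cK.
have [d Sd] : exists d : X, unit_sphere d.
  apply: contrapT => nS.
  have S0 : (unit_sphere : set T) = set0.
    by apply/seteqP; split => y // Sy; apply: nS; exists y.
  by move: muS; rewrite S0 measure0 => -[] /eqP; rewrite eq_sym oner_eq0.
rewrite compact_cover in cK.
have [D' D'K KD'] := cK X K (fun k => ball k e) (fun k _ => ball_open k e)
  (fun y Ky => @ex_intro2 _ K (fun k => ball k e y) y Ky (ballxx y e0)).
pose s : seq X := finmap.enum_fset D'.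
have sS : forall c, c \in s -> unit_sphere c.
  by move=> c cs; apply: KS; have := D'K c cs; rewrite inE.
have Kclose : forall y, K y -> exists2 c, c \in s & `|c - y| < e.
  move=> y /KD' [c cD' cy]; exists c => //.
  by move: cy; rewrite -ball_normE.
pose Phi := mkmfun (phi_meas e d s).
pose nu := distribution mu Phi.
have nuS0 : nu (~` unit_sphere) = 0%E.
  apply: (etrans (L_push _ _ _)); rewrite (_ : _ @^-1` _ = set0) ?measure0 //.
  by apply/seteqP; split => y //= ; apply; exact: phi_S.
have nuF : nu [set` (d :: s)] = 1%E.
  apply: (etrans (L_push _ _ _)).
  rewrite (_ : _ @^-1` _ = setT); first exact: probability_setT.
  by apply/seteqP; split => y //= _; exact: phi_in.
exists nu; split.
  split; first by split; [exact: (L_reg (L_seq_fin (d :: s)) nuF) | exact: nuS0].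
  exists [set` (d :: s)]; split; [exact: (L_seq_fin (d :: s)) | | exact: nuF].
  by move=> z; rewrite /= inE => /orP[/eqP->|]; [exact: Sd| exact: sS].
have mphid : measurable_fun setT (fun y : T => (`|phi e d s y - y|)%:E).
  apply/(@measurable_EFinP _ T R setT (fun y : T => `|phi e d s y - y|)).
  apply: (@phi_hmeas _ _ e d s (fun y c => `|c - y|)) => c; exact: L_dist_cont.
have mSK : measurable (unit_sphere `\` K : set T) by exact: measurableD.
have muSK : (mu (unit_sphere `\` K) <= e%:E)%E.
  apply: (@le_trans _ _ (mu (~` K))).
    by apply: le_measure; rewrite ?inE //; exact: measurableC.
  have h : mu (~` K) = (1 - mu K)%E := probability_setC mu mK.
  rewrite h -(fineK (L_fin mu mK)) -EFinB lee_fin.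
  move: muK; rewrite -(fineK (L_fin mu mK)) lte_fin; lra.
have Ebnd : (\int[mu]_y (`|phi e d s y - y|)%:E <= (3 * e)%:E)%E.
  rewrite (@ge0_negligible_integral _ _ _ mu setT (~` unit_sphere)) //; last first.
    by apply: measurableC; exact: L_sphere.
  rewrite setTD setCK -(setDUK KS) ge0_integral_setU //; last 2 first.
  - exact: (measurable_funS measurableT (@subsetT _ _) mphid).
  - by rewrite disj_set2E setDIK.
  have h1 : (\int[mu]_(y in K) (`|phi e d s y - y|)%:E <= e%:E)%E.
    apply: (@le_trans _ _ (\int[mu]_(y in K) e%:E)%E).
      apply: ge0_le_integral => //.
      - exact: (measurable_funS measurableT (@subsetT _ _) mphid).
      - by move=> y Ky; rewrite lee_fin; apply: ltW; apply: phi_close; exact: Kclose.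
    rewrite integral_cst // -[leRHS]mule1; apply: lee_wpmul2l.
      by rewrite lee_fin; exact: ltW.
    exact: probability_le1.
  have h2 : (\int[mu]_(y in unit_sphere `\` K) (`|phi e d s y - y|)%:E <= (2 * e)%:E)%E.
    apply: (@le_trans _ _ (\int[mu]_(y in unit_sphere `\` K) 2%:E)%E).
      apply: ge0_le_integral => //.
      - exact: (measurable_funS measurableT (@subsetT _ _) mphid).
      - move=> y [Sy _]; rewrite lee_fin.
        apply: (le_trans (ler_normB _ _)).
        have := phi_S e y Sd sS; rewrite /unit_sphere /= => ->.
        by rewrite /unit_sphere /= in Sy; rewrite Sy.
    rewrite integral_cst // EFinM; apply: lee_wpmul2l => //.
  apply: (le_trans (leeD h1 h2)); rewrite -EFinD lee_fin; lra.
move=> x.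
have [Ex _] := L_potE nuS0 x.
have [Ey _] := L_potE mu0 x.
have mxphi : measurable_fun setT (fun y : T => (`|x - phi e d s y|)%:E).
  apply/(@measurable_EFinP _ T R setT (fun y : T => `|x - phi e d s y|)).
  apply: (@phi_hmeas _ _ e d s (fun y c => `|x - c|)) => c.
  exact: cst_continuous.
have Epush : (potential nu x)%:E = (\int[mu]_y (`|x - phi e d s y|)%:E)%E.
  rewrite Ex ge0_integral_distribution //; first exact: L_mdist.
have m1 : measurable_fun setT (fun y : T => (`|x - y| + `|phi e d s y - y|)%:E).
  apply/(@measurable_EFinP _ T R setT (fun y : T => `|x - y| + `|phi e d s y - y|)).
  apply: (@phi_hmeas _ _ e d s (fun y c => `|x - y| + `|c - y|)) => c.
  move=> z; apply: (@continuousD _ _ _ (fun y : X => `|x - y|) (fun y : X => `|c - y|)).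
    exact: L_dist_cont.
  exact: L_dist_cont.
have m2 : measurable_fun setT (fun y : T => (`|x - phi e d s y| + `|phi e d s y - y|)%:E).
  apply/(@measurable_EFinP _ T R setT (fun y : T => `|x - phi e d s y| + `|phi e d s y - y|)).
  apply: (@phi_hmeas _ _ e d s (fun y c => `|x - c| + `|c - y|)) => c.
  move=> z; apply: (@continuousD _ _ _ (fun y : X => `|x - c|) (fun y : X => `|c - y|)).
    exact: cst_continuous.
  exact: L_dist_cont.
split.
- rewrite -lee_fin Epush EFinD Ey.
  apply: (@le_trans _ _ (\int[mu]_y (`|x - y| + `|phi e d s y - y|)%:E)%E).
    apply: ge0_le_integral => //.
    move=> y _; rewrite lee_fin (distrC (phi e d s y) y); exact: ler_distD.
  rewrite (eq_integral (fun y : T => (`|x - y|)%:E + (`|phi e d s y - y|)%:E)%E) //.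
  rewrite ge0_integralD //; try exact: L_mdist; try (by move=> y _; rewrite lee_fin).
  by apply: leeD2l; exact: Ebnd.
- rewrite -lee_fin Ey EFinD Epush.
  apply: (@le_trans _ _ (\int[mu]_y (`|x - phi e d s y| + `|phi e d s y - y|)%:E)%E).
    apply: ge0_le_integral => //.
    - exact: L_mdist.
    - by move=> y _; rewrite lee_fin; exact: ler_distD.
  rewrite (eq_integral (fun y : T => (`|x - phi e d s y|)%:E + (`|phi e d s y - y|)%:E)%E) //.
  rewrite ge0_integralD //; try (by move=> y _; rewrite lee_fin).
  by apply: leeD2l; exact: Ebnd.
Qed.

End Approx.

Section Final.
Local Open Scope classical_set_scope.
Local Open Scope ring_scope.
Context {R : realType} {X : normedModType R}.
Local Notation T := (@borelX R X).

Lemma L_Sne (mu : probability T R) : mu (~` unit_sphere) = 0%E ->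
  exists d : X, unit_sphere d.
Proof.
move=> mu0; have muS := L_muS mu0.
apply: contrapT => nS.
have S0 : (unit_sphere : set T) = set0.
  by apply/seteqP; split => y // Sy; apply: nS; exists y.
by move: muS; rewrite S0 measure0 => -[] /eqP; rewrite eq_sym oner_eq0.
Qed.

Lemma L_RsubA : calR R X `<=` calA R X.
Proof.
move=> r Rr mu Mmu.
have [lb [ub B]] := L_bnd Mmu.2.
have [d Sd] := L_Sne Mmu.2.
rewrite /Aset /=; apply/andP; split.
- apply/ler_addgt0Pr => e e0.
  have e3 : 0 < e / 3 by lra.
  have [nu [Mnu H]] := L_approx Mmu e3.
  have [lbn [ubn Bn]] := L_bnd Mnu.1.2.
  have /andP[Rn1 _] := Rr nu Mnu.
  suff : inf (potential mu @` unit_sphere) - e <= inf (potential nu @` unit_sphere) by lra.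
  apply: lb_le_inf; first by exists (potential nu d), d.
  move=> _ [x Sx <-].
  have := ge_inf lb (ex_intro2 _ _ x Sx erefl).
  have [_ h2] := H x; lra.
- apply/ler_addgt0Pr => e e0.
  have e3 : 0 < e / 3 by lra.
  have [nu [Mnu H]] := L_approx Mmu e3.
  have [lbn [ubn Bn]] := L_bnd Mnu.1.2.
  have /andP[_ Rn2] := Rr nu Mnu.
  suff : sup (potential nu @` unit_sphere) <= sup (potential mu @` unit_sphere) + e by lra.
  apply: ge_sup; first by exists (potential nu d), d.
  move=> _ [x Sx <-].
  have := ub_le_sup ub (ex_intro2 _ _ x Sx erefl).
  have [h1 _] := H x; lra.
Qed.

Lemma L_nonempty : exists r, calR R X r.
Proof.
pose r := sup [set inf (potential mu @` unit_sphere) | mu in @M1fin R X].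
exists r => nu Mnu; rewrite /Aset /=; apply/andP; split.
- apply: ub_le_sup; last by exists nu.
  by exists (sup (potential nu @` unit_sphere)) => _ [mu Mmu <-]; exact: L_cross.
- apply: ge_sup; first by exists (inf (potential nu @` unit_sphere)), nu.
  by move=> _ [mu Mmu <-]; exact: L_cross.
Qed.

End Final.

Theorem theorem3p1 (R : realType) (X : normedModType R) :
  calA R X = calR R X /\ calA R X <> set0.
Proof.
have AR : calA R X = calR R X.
  apply/seteqP; split; last exact: L_RsubA.
  by move=> r Ar mu Mmu; exact: Ar _ Mmu.1.
split => // h0.
have [r Rr] := @L_nonempty R X.
by move: Rr; rewrite -AR h0.
Qed.
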